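(* Let $k > d \geq 1$ and $1 < q \leq k$ be integers. There is a function $f = f_{k,d,q} : \mathbb{N} \to \mathbb{R}$ with $f(N) \to 0$ as $N \to \infty$ such that for every positive integer $n$ with $q \mid n-2$, setting $N = (k-1)n - k + 2$, there exists an $N$-vertex $k$-graph $H$ with $\delta_d(H) \geq (1/q - f(N)) \binom{N-d}{k-d}$ that does not contain the $k$-expansion of any $n$-vertex tree all of whose vertex degrees are congruent to $1$ modulo $q$.
   Context: A $k$-graph is a $k$-uniform hypergraph. For a $k$-graph $H$ and $S \subseteq V(H)$, $\deg_H(S)$ is the number of edges containing $S$, and $\delta_d(H)$ is the minimum of $\deg_H(S)$ over all $d$-subsets $S \subseteq V(H)$. The $k$-expansion $T^{(k)}$ of a graph $T$ is the $k$-graph obtained by replacing each edge $uv$ of $T$ by a $k$-edge consisting of $u$, $v$ and $k-2$ new vertices that belong to no other edge. ''Contain'' means as a (not necessarily induced) subgraph. *)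

(* Defs.v *)
From Stdlib Require Export Reals.
From mathcomp Require Export all_boot fingraph.

Set Implicit Arguments.
Unset Strict Implicit.
Unset Printing Implicit Defensive.

Definition uniform (V : finType) (k : nat) (E : {set {set V}}) : Prop :=
  forall e, e \in E -> #|e| = k.

Definition hdeg (V : finType) (E : {set {set V}}) (S : {set V}) : nat :=
  #|[set e in E | S \subset e]|.

(* delta_d(H) = minimum of deg_H(S) over all d-subsets S
   (#|E| is used as the neutral element; it is an upper bound of every degree). *)
Definition mindeg (V : finType) (d : nat) (E : {set {set V}}) : nat :=
  \big[minn/#|E|]_(S : {set V} | #|S| == d) hdeg E S.

Definition contains (U V : finType) (F : {set {set U}}) (E : {set {set V}}) : Prop :=
  exists g : U -> V, injective g /\ forall e, e \in F -> g @: e \in E.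

Definition gadj (n : nat) (ET : {set {set 'I_n}}) : rel 'I_n :=
  fun u v => [set u; v] \in ET.

Definition is_tree (n : nat) (ET : {set {set 'I_n}}) : Prop :=
  [/\ forall e, e \in ET -> #|e| = 2,
      forall u v : 'I_n, connect (gadj ET) u v
    & #|ET| = n.-1].

Definition gdeg (n : nat) (ET : {set {set 'I_n}}) (v : 'I_n) : nat :=
  #|[set e in ET | v \in e]|.

(* Vertices of the k-expansion T^(k): the original vertices, plus for each
   edge e of T, k-2 new vertices (e, 0), ..., (e, k-3). *)
Definition exp_new (n k : nat) (ET : {set {set 'I_n}}) : predArgType :=
  {x : {set 'I_n} * 'I_(k - 2) | x.1 \in ET}.

Definition exp_vert (n k : nat) (ET : {set {set 'I_n}}) : finType :=
  ('I_n + exp_new k ET)%type.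

Definition exp_edge (n k : nat) (ET : {set {set 'I_n}}) (e : {set 'I_n})
  : {set exp_vert k ET} :=
  [set inl v | v in e] :|: [set inr x | x : exp_new k ET & (val x).1 == e].

Definition expansion (n k : nat) (ET : {set {set 'I_n}}) : {set {set exp_vert k ET}} :=
  [set exp_edge k ET e | e in ET].

(* Main.v *)
Require Import Defs.
From Stdlib Require Import Lra Lia.
From mathcomp Require Import zify.
Set Implicit Arguments.
Unset Strict Implicit.
Unset Printing Implicit Defensive.

Definition wsum N (e : {set 'I_N}) : nat := \sum_(v in e) (v : nat).
Definition Hq N k q c : {set {set 'I_N}} :=
  [set e : {set 'I_N} | (#|e| == k) && (wsum e %% q == c)].

Lemma wsumU N (A B : {set 'I_N}) : [disjoint A & B] -> wsum (A :|: B) = wsum A + wsum B.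
Proof.
move=> dAB; rewrite /wsum -bigU //; apply: eq_bigl => x; by rewrite !inE.
Qed.

Lemma count_res N q b c : 0 < q -> c < q -> N %/ q <= #|[set v : 'I_N | (b + v) %% q == c]|.
Proof.
move=> q0 cq; case: N => [|N]; first by rewrite div0n.
set r := (c + (q - b %% q)) %% q.
have rq : r < q by rewrite ltn_mod.
pose h (j : 'I_(N.+1 %/ q)) : 'I_N.+1 := inord (j * q + r).
have hlt (j : 'I_(N.+1 %/ q)) : j * q + r < N.+1.
  have := ltn_ord j; have := leq_trunc_div N.+1 q => H1 H2.
  have : j.+1 * q <= N.+1 %/ q * q by rewrite leq_mul2r H2 orbT.
  rewrite mulSn; lia.
have hv j : (h j : nat) = j * q + r by rewrite inordK // -ltnS hlt.
have hinj : injective h.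
  move=> i j /(congr1 val); rewrite /= !hv => /eqP; rewrite eqn_add2r eqn_pmul2r //.
  by move/eqP/val_inj.
rewrite -[X in X <= _]card_ord -(card_imset _ hinj); apply: subset_leq_card.
apply/subsetP => x /imsetP [j _ ->]; rewrite inE hv.
have bm := divn_eq b q; have bq : b %% q < q by rewrite ltn_mod.
rewrite addnCA modnMDl /r modnDmr.
have -> : b + (c + (q - b %% q)) = (b %/ q).+1 * q + c by rewrite mulSn; lia.
by rewrite modnMDl modn_small.
Qed.

Lemma card_dep (T1 T2 : finType) (A : {set T1}) (B : T1 -> {set T2}) :
  #|[set p : T1 * T2 | (p.1 \in A) && (p.2 \in B p.1)]| = \sum_(x in A) #|B x|.
Proof.
rewrite -sum1_card big_mkcond /=.
transitivity (\sum_(x : T1) \sum_(y : T2) (if (x \in A) && (y \in B x) then 1 else 0)).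
  rewrite pair_bigA /=; apply: eq_bigr => -[x y] _; by rewrite inE.
rewrite [RHS]big_mkcond /=; apply: eq_bigr => x _.
case: (boolP (x \in A)) => xA.
  rewrite -sum1_card [RHS]big_mkcond /=; by [].
by apply: big1.
Qed.

Lemma deg_bound N q k d c (S : {set 'I_N}) : 0 < q -> c < q -> #|S| = d -> d < k ->
  'C(N - d, (k - d).-1) * (N %/ q - k.-1) <= (k - d) * hdeg (Hq N k q c) S.
Proof.
move=> q0 cq Sd dk.
set m := (k - d).-1.
have km : k - d = m.+1 by rewrite /m; lia.
have dmk : d + m.+1 = k by lia.
have dmk1 : k.-1 = d + m by lia.
rewrite km.
set X := ~: S.
have cX : #|X| = N - d by rewrite cardsCs setCK card_ord Sd.
set a := wsum S.
set G := [set R : {set 'I_N} | [&& R \subset X, #|R| == m.+1 & (a + wsum R) %% q == c]].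
have G_le : #|G| <= hdeg (Hq N k q c) S.
  have key (R : {set 'I_N}) : R \subset X -> (S :|: R) :\: S = R.
    move=> sR; rewrite setDUl setDv set0U; apply/setDidPl.
    by rewrite subsets_disjoint setCK in sR.
  have inj : {in G &, injective (fun R => S :|: R)}.
    move=> R1 R2; rewrite !inE => /and3P[s1 _ _] /and3P[s2 _ _] E.
    by rewrite -(key R1 s1) -(key R2 s2) E.
  rewrite /hdeg -(card_in_imset inj); apply: subset_leq_card.
  apply/subsetP => e /imsetP [R]; rewrite inE => /and3P [sR cR wR] ->.
  have dj : [disjoint S & R] by rewrite disjoint_sym -[S]setCK -subsets_disjoint.
  rewrite !inE subsetUl andbT wsumU // cardsU (disjoint_setI0 dj) cards0 Sd (eqP cR) subn0 wR.
  by rewrite dmk eqxx.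
set P := [set p : {set 'I_N} * 'I_N | (p.1 \in G) && (p.2 \in (fun R => R) p.1)].
have cP : #|P| = \sum_(R in G) #|R| := card_dep G (fun R => R).
have cP2 : \sum_(R in G) #|R| = #|G| * m.+1.
  by rewrite -sum_nat_const; apply: eq_bigr => R; rewrite inE => /and3P[_ /eqP -> _].
set D := [set R : {set 'I_N} | R \subset X & #|R| == m].
set Bf := fun R : {set 'I_N} => [set v : 'I_N | (v \in X :\: R) && ((a + wsum R + v) %% q == c)].
set Q := [set p : {set 'I_N} * 'I_N | (p.1 \in D) && (p.2 \in Bf p.1)].
have QP : #|Q| <= #|P|.
  have inj : {in Q &, injective (fun p : {set 'I_N} * 'I_N => (p.2 |: p.1, p.2))}.
    move=> [R1 v1] [R2 v2]; rewrite !inE /= => /and3P[_ /andP[n1 _] _].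
    move=> /and3P[_ /andP[n2 _] _] [E1 E2]; subst v2.
    by rewrite -(setU1K n1) E1 setU1K.
  rewrite -(card_in_imset inj); apply: subset_leq_card.
  apply/subsetP => p /imsetP [[R v]]; rewrite !inE /= => /and3P[/andP[sR /eqP cR] /andP[vR vS] wc] ->.
  have vX : v \in X by rewrite /X inE.
  rewrite /= setU11 andbT subUset sub1set vX sR cardsU1 vR cR /=.
rewrite add1n eqxx /=.
  rewrite /wsum big_setU1 //= -/(wsum R) -/(wsum S) -/a.
  by rewrite (addnC v) addnA.
have cQ : #|Q| = \sum_(R in D) #|Bf R| := card_dep D Bf.
have lb : forall R, R \in D -> N %/ q - k.-1 <= #|Bf R|.
  move=> R; rewrite inE => /andP [sR /eqP cR].
  have Y := count_res N (a + wsum R) q0 cq.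
  set Ys := [set v : 'I_N | (a + wsum R + v) %% q == c] in Y.
  have -> : Bf R = Ys :\: (S :|: R).
    apply/setP => v; rewrite /Bf /X !inE.
    by case: (v \in R); case: (v \in S); case: (_ == c).
  have H1 := cardsID (S :|: R) Ys.
  have H2 : #|Ys :&: (S :|: R)| <= d + m.
    apply: leq_trans (subset_leq_card (subsetIr _ _)) _.
    by rewrite cardsU Sd cR leq_subr.
rewrite dmk1 leq_subLR; apply: leq_trans Y _; rewrite -H1 leq_add2r H2 //.
have cD : #|D| = 'C(N - d, m) by rewrite cards_draws cX.
change ('C(N - d, m) * (N %/ q - k.-1) <= m.+1 * hdeg (Hq N k q c) S).
rewrite -cD -sum_nat_const.
apply: (@leq_trans (\sum_(R in D) #|Bf R|)); first exact: leq_sum.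
rewrite -cQ.
apply: leq_trans QP _.
rewrite cP cP2 mulnC; by rewrite leq_mul2l G_le orbT.
Qed.

Lemma mem_exp_edge n k (ET : {set {set 'I_n}}) e (x : exp_vert k ET) :
  (x \in exp_edge k ET e) =
  match x with inl v => v \in e | inr y => (val y).1 == e end.
Proof.
rewrite /exp_edge in_setU; case: x => [v|y].
  have -> : (inl v \in [set inr x | x : exp_new k ET & (val x).1 == e]) = false.
    by apply/imsetP => -[z _].
  rewrite orbF; apply/imsetP/idP => [[u uin [->]] | vin] //; by exists v.
have -> : (inr y \in [set inl u | u in e]) = false by apply/imsetP => -[z _].
rewrite /=; apply/imsetP/idP => [[z zin [->]] | H]; first by rewrite inE in zin.
by exists y; rewrite ?inE.
Qed.

Lemma card_exp n k (ET : {set {set 'I_n}}) :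
  #|exp_vert k ET| = n + #|ET| * (k - 2).
Proof.
rewrite /exp_vert card_sum card_ord card_sig.
have -> : #|[pred x : {set 'I_n} * 'I_(k - 2) | x.1 \in ET]| = #|setX ET [set: 'I_(k-2)]|.
  by apply: eq_card => x; rewrite !inE andbT.
by rewrite cardsX cardsT card_ord.
Qed.

Lemma sumT (T : finType) (F : T -> nat) : \sum_(x in [set: T]) F x = \sum_x F x.
Proof. by apply: eq_bigl => x; rewrite inE. Qed.

Lemma no_embed n k q N (ET : {set {set 'I_n}}) c :
  1 < q -> 1 < k -> 0 < n -> n = 2 %[mod q] -> #|ET| = n.-1 ->
  (forall v, gdeg ET v = 1 %[mod q]) ->
  N = ((k - 1) * n + 2 - k) ->
  c = (\sum_(v : 'I_N) (v : nat) + 1) %% q ->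
  ~ contains (expansion k ET) (Hq N k q c).
Proof.
move=> q1 k1 n0 nq cET degq hN hc [g [ginj gE]].
have q0 : 0 < q by lia.
have cV : #|exp_vert k ET| = N by rewrite card_exp cET hN; nia.
have surj : g @: setT = setT.
  apply/eqP; rewrite eqEcard subsetT cardsT card_ord card_imset // cardsT cV leqnn //=.
have Wsum : \sum_(x : exp_vert k ET) g x = \sum_(v : 'I_N) (v : nat).
  rewrite -sumT -[in RHS]sumT -surj big_imset //.
  by move=> x y _ _; apply: ginj.
set W := \sum_(v : 'I_N) (v : nat) in hc Wsum.
have edge e : e \in ET -> (\sum_(x in exp_edge k ET e) g x) %% q = c.
  move=> eET; have := gE _ (imset_f (exp_edge k ET) eET).
  rewrite inE => /andP[_ /eqP]; rewrite /wsum big_imset //.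
  by move=> x y _ _; apply: ginj.
set T := \sum_(e in ET) \sum_(x in exp_edge k ET e) g x.
have T1 : T %% q = c.
  rewrite /T -modn_summ (eq_bigr (fun _ => c)) //.
  rewrite sum_nat_const cET -modnMml.
  have -> : n.-1 %% q = 1.
    have : n.-1 + 1 = 1 + 1 %[mod q] by rewrite addn1 prednK //.
    by move/eqP; rewrite eqn_modDr => /eqP ->; rewrite modn_small.
  by rewrite mul1n hc modn_mod.
have T2 : T %% q = W %% q.
  have -> : T = \sum_(x : exp_vert k ET) \sum_(e in ET) (if x \in exp_edge k ET e then (g x : nat) else 0).
    rewrite /T (eq_bigr (fun e => \sum_x (if x \in exp_edge k ET e then (g x : nat) else 0))); last by move=> e _; rewrite big_mkcond.
    by rewrite exchange_big.
  rewrite -Wsum -[LHS]modn_summ -[RHS]modn_summ; congr (_ %% _); apply: eq_bigr => x _.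
  case: x => [v|y].
    rewrite -big_mkcondr.
    rewrite (eq_bigl (fun e => e \in [set e in ET | v \in e])); last first.
      by move=> e; rewrite mem_exp_edge inE.
    rewrite sum_nat_const -modnMml.
    have := degq v; rewrite /gdeg => ->.
    by rewrite (modn_small q1) mul1n.
  have yE : (val y).1 \in ET := valP y.
  rewrite (bigD1 (val y).1) //= mem_exp_edge eqxx big1 ?addn0 //.
  by move=> e /andP[_ ne]; rewrite mem_exp_edge eq_sym (negbTE ne).
have := T1; rewrite T2 hc => H.
have : (W + 0) %% q == (W + 1) %% q by rewrite addn0 H.
by rewrite eqn_modDl mod0n modn_small.
Qed.
Section RealStuff.
Local Open Scope R_scope.

Lemma real_key (q N k D L M : R) : 0 < q -> 0 < N -> 0 <= L -> L <= N ->
  N < (D + 1) * q -> M >= D - (k - 1) -> 0 <= M -> M >= (1 / q - k / N) * L.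
Proof.
intros q0 N0 L0 LN ND MD M0.
set (s := 1 / q - k / N).
destruct (Rle_or_lt s 0) as [Hs|Hs].
- assert (s * L <= 0) by nra. lra.
- assert (s * L <= s * N) by (apply Rmult_le_compat_l; lra).
  assert (E1 : s * N = N / q - k) by (unfold s; field; lra).
  assert (E2 : N / q < D + 1).
  { apply (Rmult_lt_reg_r q); [lra|]. unfold Rdiv. rewrite Rmult_assoc Rinv_l; lra. }
  lra.
Qed.

Lemma final_real (mi A M L Cm m1 q N k D : R) : 0 < m1 -> 0 <= A -> m1 * mi >= A * M ->
  m1 * Cm = L * A -> 0 <= L -> L <= N -> 0 < q -> 0 < N -> N < (D + 1) * q ->
  M >= D - (k - 1) -> 0 <= M -> mi >= (1 / q - k / N) * Cm.
Proof.
intros m0 A0 H1 H2 L0 LN q0 N0 ND MD M0.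
assert (K := @real_key q N k D L M q0 N0 L0 LN ND MD M0).
set (s := 1 / q - k / N) in *.
assert (A * M >= A * (s * L)) by (apply Rle_ge, Rmult_le_compat_l; lra).
assert (m1 * mi >= m1 * (s * Cm)).
{ replace (m1 * (s * Cm)) with (s * (m1 * Cm)) by ring. rewrite H2. lra. }
apply Rle_ge, (Rmult_le_reg_l m1); lra.
Qed.

Lemma cv_kN (k : nat) : Un_cv (fun N => INR k / INR N) 0.
Proof.
intros eps Heps.
destruct (INR_archimed eps (INR k) Heps) as [n Hn].
exists (S n). intros m Hm.
unfold R_dist. rewrite Rminus_0_r.
assert (Hm' : INR (S n) <= INR m) by (apply le_INR; lia).
assert (0 < INR m) by (rewrite S_INR in Hm'; pose proof (pos_INR n); lra).
assert (0 <= INR k / INR m) by (unfold Rdiv; apply Rmult_le_pos; [apply pos_INR|left; apply Rinv_0_lt_compat; lra]).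
rewrite Rabs_right; last lra.
apply (Rmult_lt_reg_r (INR m)); [lra|].
unfold Rdiv; rewrite Rmult_assoc Rinv_l; last lra. rewrite S_INR in Hm'.
nra.
Qed.
End RealStuff.

Lemma mindeg_ge N d (E : {set {set 'I_N}}) a x :
  (forall S : {set 'I_N}, #|S| = d -> x <= a * hdeg E S) -> d <= N ->
  x <= a * mindeg d E.
Proof.
move=> H dN.
have [S0 S0d] : exists S0 : {set 'I_N}, #|S0| = d.
  have : 0 < #|[set A : {set 'I_N} | #|A| == d]| by rewrite card_draws card_ord bin_gt0.
  by rewrite card_gt0 => /set0Pn [S]; rewrite inE => /eqP; exists S.
rewrite /mindeg; apply: (big_ind (fun y => x <= a * y)).
- apply: leq_trans (H S0 S0d) _; rewrite leq_mul2l; apply/orP; right.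
  apply: subset_leq_card; apply/subsetP => e; rewrite inE; by case/andP.
- move=> y1 y2 h1 h2; case: (leqP y1 y2) => hy.
    by [].
  by [].
- by move=> S /eqP; apply: H.
Qed.

Theorem theorem3p4 (k d q : nat) :
  (1 <= d)%N -> (d < k)%N -> (1 < q)%N -> (q <= k)%N ->
  exists f : nat -> R,
    Un_cv (fun N => f N) R0 /\
    forall n : nat, (0 < n)%N ->
      n = 2 %[mod q] ->
      let N := ((k - 1) * n + 2 - k)%N in
      exists E : {set {set 'I_N}},
        uniform k E /\
        Rge (INR (mindeg d E))
            (Rmult (Rminus (Rdiv R1 (INR q)) (f N)) (INR 'C(N - d, k - d))) /\
        forall ET : {set {set 'I_n}},
          is_tree ET ->
          (forall v : 'I_n, gdeg ET v = 1 %[mod q]) ->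
          ~ contains (expansion k ET) E.
Proof.
move=> d1 dk q1 qk.
exists (fun N => Rdiv (INR k) (INR N)); split; first exact: cv_kN.
move=> n n0 nq N.
exists (Hq N k q ((\sum_(v : 'I_N) (v : nat) + 1) %% q)).
split; first by move=> e; rewrite inE => /andP[/eqP].
split; last first.
  move=> ET [_ _ cET] degq.
  apply: (no_embed (n:=n)) => //; lia.
set c := (_ + 1) %% q.
have q0 : 0 < q by lia.
have cq : c < q by rewrite ltn_mod.
have N0 : 0 < N by rewrite /N; nia.
case: (ltnP N d) => hNd.
  have -> : 'C(N - d, k - d) = 0 by rewrite (_ : N - d = 0); [rewrite bin0n; lia | lia].
  rewrite Rmult_0_r; apply: Rle_ge; apply: pos_INR.
set m := (k - d).-1.
have km : k - d = m.+1 by rewrite /m; lia.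
rewrite km.
have Hn : 'C(N - d, m) * (N %/ q - k.-1) <= m.+1 * mindeg d (Hq N k q c).
  apply: mindeg_ge => // S Sd; have := @deg_bound N q k d c S q0 cq Sd dk; by rewrite km.
have Hb := mul_bin_left (N - d) m.
have HL : N - d - m <= N by lia.
have HD : N < (N %/ q).+1 * q.
  by rewrite {1}(divn_eq N q) mulSn addnC ltn_add2r ltn_pmod.
have HM : N %/ q <= (N %/ q - k.-1) + k.-1 by rewrite addnC -leq_subLR.
have Hk : k = k.-1 + 1 by rewrite addn1 prednK // (leq_ltn_trans (leq0n d) dk).
have ltR a b : a < b -> Rlt (INR a) (INR b) by move=> h; apply: lt_INR; apply/ltP.
have leR a b : a <= b -> Rle (INR a) (INR b) by move=> h; apply: le_INR; apply/leP.
have mulR a b : INR (a * b) = Rmult (INR a) (INR b) by rewrite -mult_INR.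
have addR a b : INR (a + b) = Rplus (INR a) (INR b) by rewrite -plus_INR.
apply: (@final_real _ (INR 'C(N - d, m)) (INR (N %/ q - k.-1)) (INR (N - d - m)) _ (INR m.+1) _ _ _ (INR (N %/ q))).
- by apply: (ltR 0).
- exact: pos_INR.
- apply: Rle_ge; rewrite -!mulR; exact: leR.
- by rewrite -!mulR Hb.
- exact: pos_INR.
- exact: leR.
- by apply: (ltR 0); lia.
- by apply: (ltR 0).
- have := ltR _ _ HD; by rewrite mulR S_INR.
- have := leR _ _ HM; rewrite addR => h1.
  have h2 : INR k = Rplus (INR k.-1) R1 by rewrite {1}Hk addR.
  apply: Rle_ge. lra.
- exact: pos_INR.
Qed.
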